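(* Let $S^0$ be an adequate semigroup with semilattice of idempotents $E^0$, let $I=\bigcup_{x\in E^0}L_x$ be a left normal band and $\Lambda=\bigcup_{x\in E^0}R_x$ a right normal band with $E^0$ as a common semilattice transversal. Let $W=\{(e,x,f)\in I\times S^0\times\Lambda: e\in L_{x^+},\ f\in R_{x^\ast}\}$ with multiplication $(e,x,f)(g,y,h)=(e(xy)^+,\,xy,\,(xy)^\ast h)$. Then $W$ is a quasi-adequate semigroup with a quasi-ideal, admissible adequate transversal isomorphic to $S^0$. Conversely, every quasi-adequate semigroup with a quasi-ideal, admissible adequate transversal can be constructed (up to isomorphism) in this way.
   Context: For a semigroup $S$, $S^1$ is $S$ with an identity adjoined, $E(S)$ its idempotents, $\mathcal{L},\mathcal{R}$ Green's relations. $\mathcal{R}^\ast=\{(a,b):\forall x,y\in S^1,\ xa=ya\iff xb=yb\}$, $\mathcal{L}^\ast=\{(a,b):\forall x,y\in S^1,\ ax=ay\iff bx=by\}$. $S$ is abundant if every $\mathcal{R}^\ast$- and $\mathcal{L}^\ast$-class contains an idempotent; adequate if moreover idempotents commute, and then $a^+$ ($a^\ast$) is the unique idempotent $\mathcal{R}^\ast$- ($\mathcal{L}^\ast$-) related to $a$. An abundant subsemigroup $U$ of abundant $S$ is a $\ast$-subsemigroup if $\mathcal{L}^\ast(U)=\mathcal{L}^\ast(S)\cap(U\times U)$ and $\mathcal{R}^\ast(U)=\mathcal{R}^\ast(S)\cap(U\times U)$. An adequate $\ast$-subsemigroup $S^0$ of abundant $S$ is an adequate transversal if each $x\in S$ has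 a unique $\overline{x}\in S^0$ and idempotents $e,f$ with $x=e\overline{x}f$, $e\,\mathcal{L}\,\overline{x}^+$, $f\,\mathcal{R}\,\overline{x}^\ast$. Quasi-adequate: abundant with $E(S)$ a subsemigroup. The transversal is admissible if $\overline{xy}=\overline{x}\,\overline{y}$ for all $x,y\in S$, and a quasi-ideal if $S^0SS^0\subseteq S^0$. A left normal band satisfies $xyz=xzy$, a right normal band $xyz=yxz$. $E^0$ is a semilattice transversal of a band $B$ if it is a subsemilattice of $B$ and each element of $B$ has exactly one inverse in $E^0$; common means this holds in both $I$ and $\Lambda$. For $x\in E^0$, $L_x$ is the $\mathcal{L}$-class of $x$ in $I$ and $R_x$ the $\mathcal{R}$-class of $x$ in $\Lambda$. *)

(* Defs.v *)
(* Semigroups are given by a type,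
   a binary operation and a carrier predicate; all notions are relative to the
   carrier, so that subsemigroups (e.g. a transversal S^0 inside S) are handled
   uniformly. *)
Set Implicit Arguments.

Definition full (T : Type) : T -> Prop := fun _ => True.
Arguments full T _ : clear implicits.

Section Semigroups.
Variable T : Type.
Variable mul : T -> T -> T.


(* elements of S^1 : None is the adjoined identity *)
Definition one_ok (A : T -> Prop) (u : option T) : Prop :=
  match u with None => True | Some x => A x end.
Definition lact (u : option T) (a : T) : T :=
  match u with None => a | Some x => mul x a end.
Definition ract (a : T) (u : option T) : T :=
  match u with None => a | Some x => mul a x end.

Definition semigroup (A : T -> Prop) : Prop :=
  (forall x y, A x -> A y -> A (mul x y)) /\
  (forall x y z, A x -> A y -> A z -> mul (mul x y) z = mul x (mul y z)).

Definition idem (A : T -> Prop) (e : T) : Prop := A e /\ mul e e = e.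

Definition Rstar (A : T -> Prop) (a b : T) : Prop :=
  forall u v, one_ok A u -> one_ok A v ->
    (lact u a = lact v a <-> lact u b = lact v b).
Definition Lstar (A : T -> Prop) (a b : T) : Prop :=
  forall u v, one_ok A u -> one_ok A v ->
    (ract a u = ract a v <-> ract b u = ract b v).

Definition GreenL (A : T -> Prop) (a b : T) : Prop :=
  exists u v, one_ok A u /\ one_ok A v /\ a = lact u b /\ b = lact v a.
Definition GreenR (A : T -> Prop) (a b : T) : Prop :=
  exists u v, one_ok A u /\ one_ok A v /\ a = ract b u /\ b = ract a v.

Definition abundant (A : T -> Prop) : Prop :=
  semigroup A /\
  forall a, A a ->
    (exists e, idem A e /\ Rstar A a e) /\ (exists f, idem A f /\ Lstar A a f).

Definition adequate (A : T -> Prop) : Prop :=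
  abundant A /\
  forall e f, idem A e -> idem A f -> mul e f = mul f e.

Definition quasi_adequate (A : T -> Prop) : Prop :=
  abundant A /\
  forall e f, idem A e -> idem A f -> idem A (mul e f).

Definition star_subsemigroup (A U : T -> Prop) : Prop :=
  (forall x, U x -> A x) /\ abundant U /\
  forall a b, U a -> U b ->
    (Lstar U a b <-> Lstar A a b) /\ (Rstar U a b <-> Rstar A a b).

(* bar_rel A U x xb : xb in U and x = e xb f with e, f idempotents of A,
   e L xb^+ and f R xb^* (xb^+, xb^* the idempotents of U that are
   R*- resp. L*-related to xb in U; unique since U is adequate). *)
Definition bar_rel (A U : T -> Prop) (x xb : T) : Prop :=
  U xb /\
  exists e f, idem A e /\ idem A f /\ x = mul (mul e xb) f /\
    (exists p, idem U p /\ Rstar U xb p /\ GreenL A e p) /\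
    (exists q, idem U q /\ Lstar U xb q /\ GreenR A f q).

Definition adequate_transversal (A U : T -> Prop) : Prop :=
  adequate U /\ star_subsemigroup A U /\
  forall x, A x -> exists! xb, bar_rel A U x xb.

Definition admissible (A U : T -> Prop) : Prop :=
  forall x y xb yb, A x -> A y -> bar_rel A U x xb -> bar_rel A U y yb ->
    bar_rel A U (mul x y) (mul xb yb).

Definition quasi_ideal (A U : T -> Prop) : Prop :=
  forall a s b, U a -> A s -> U b -> U (mul (mul a s) b).

Definition band : Prop := semigroup (full T) /\ forall x, mul x x = x.
Definition left_normal_band : Prop :=
  band /\ forall x y z, mul (mul x y) z = mul (mul x z) y.
Definition right_normal_band : Prop :=
  band /\ forall x y z, mul (mul x y) z = mul (mul y x) z.

Definition inverse (a b : T) : Prop :=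
  mul (mul a b) a = a /\ mul (mul b a) b = b.

End Semigroups.

Definition iso (T1 T2 : Type) (mul1 : T1 -> T1 -> T1) (A : T1 -> Prop)
  (mul2 : T2 -> T2 -> T2) (B : T2 -> Prop) : Prop :=
  exists phi : T1 -> T2,
    (forall x, A x -> B (phi x)) /\
    (forall x y, A x -> A y -> phi x = phi y -> x = y) /\
    (forall y, B y -> exists x, A x /\ phi x = y) /\
    (forall x y, A x -> A y -> phi (mul1 x y) = mul2 (phi x) (phi y)).

(* S^0 is the whole type T0 (adequate);
   plus/star are the (unique) maps x |-> x^+, x |-> x^*.  The band I
   (type TI) and Lambda (type TL) contain E^0 via the maps jI, jL, which are
   injective semigroup homomorphisms on E^0 (so E^0 is the same
   subsemilattice of I and of Lambda). *)
Definition W_hyp (T0 : Type) (mul0 : T0 -> T0 -> T0) (plus star : T0 -> T0)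
  (TI : Type) (mulI : TI -> TI -> TI) (jI : T0 -> TI)
  (TL : Type) (mulL : TL -> TL -> TL) (jL : T0 -> TL) : Prop :=
  adequate mul0 (full T0) /\
  (forall x, idem mul0 (full T0) (plus x) /\ Rstar mul0 (full T0) x (plus x)) /\
  (forall x, idem mul0 (full T0) (star x) /\ Lstar mul0 (full T0) x (star x)) /\
  left_normal_band mulI /\ right_normal_band mulL /\
  (forall e f, idem mul0 (full T0) e -> idem mul0 (full T0) f ->
     jI (mul0 e f) = mulI (jI e) (jI f)) /\
  (forall e f, idem mul0 (full T0) e -> idem mul0 (full T0) f ->
     jI e = jI f -> e = f) /\
  (forall e f, idem mul0 (full T0) e -> idem mul0 (full T0) f ->
     jL (mul0 e f) = mulL (jL e) (jL f)) /\
  (forall e f, idem mul0 (full T0) e -> idem mul0 (full T0) f ->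
     jL e = jL f -> e = f) /\
  (* E^0 is a semilattice transversal of I and of Lambda *)
  (forall a : TI, exists e, idem mul0 (full T0) e /\ inverse mulI a (jI e) /\
     forall e', idem mul0 (full T0) e' -> inverse mulI a (jI e') -> e' = e) /\
  (forall a : TL, exists e, idem mul0 (full T0) e /\ inverse mulL a (jL e) /\
     forall e', idem mul0 (full T0) e' -> inverse mulL a (jL e') -> e' = e) /\
  (* I = union of L_x (x in E^0), Lambda = union of R_x (x in E^0) *)
  (forall a : TI, exists e, idem mul0 (full T0) e /\ GreenL mulI (full TI) a (jI e)) /\
  (forall a : TL, exists e, idem mul0 (full T0) e /\ GreenR mulL (full TL) a (jL e)).

Definition W_carrier (T0 : Type) (plus star : T0 -> T0)
  (TI : Type) (mulI : TI -> TI -> TI) (jI : T0 -> TI)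
  (TL : Type) (mulL : TL -> TL -> TL) (jL : T0 -> TL)
  (w : TI * T0 * TL) : Prop :=
  let '(e, x, f) := w in
  GreenL mulI (full TI) e (jI (plus x)) /\ GreenR mulL (full TL) f (jL (star x)).

Definition W_mul (T0 : Type) (mul0 : T0 -> T0 -> T0) (plus star : T0 -> T0)
  (TI : Type) (mulI : TI -> TI -> TI) (jI : T0 -> TI)
  (TL : Type) (mulL : TL -> TL -> TL) (jL : T0 -> TL)
  (w1 w2 : TI * T0 * TL) : TI * T0 * TL :=
  let '(e, x, _) := w1 in
  let '(_, y, h) := w2 in
  (mulI e (jI (plus (mul0 x y))), mul0 x y, mulL (jL (star (mul0 x y))) h).

(* Main.v *)
Require Import Defs.
From Stdlib Require Import ProofIrrelevance ClassicalEpsilon.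
Set Implicit Arguments.

Lemma ok_full (X : Type) (w : option X) : one_ok (full X) w.
Proof. destruct w; simpl; exact I. Qed.

Section Gen.
Variable T : Type.
Variable mul : T -> T -> T.
Variable A : T -> Prop.

Lemma Rstar_idem a e : A e -> mul e e = e -> Rstar mul A a e -> mul e a = a.
Proof. intros He Hee H. apply (proj2 (H (Some e) None He I)). simpl. exact Hee. Qed.

Lemma Lstar_idem a f : A f -> mul f f = f -> Lstar mul A a f -> mul a f = a.
Proof. intros Hf Hff H. apply (proj2 (H (Some f) None Hf I)). simpl. exact Hff. Qed.

Lemma Rstar_refl a : Rstar mul A a a.
Proof. intros u v _ _. tauto. Qed.
Lemma Lstar_refl a : Lstar mul A a a.
Proof. intros u v _ _. tauto. Qed.

Lemma Rstar_trans3 a b c : Rstar mul A a b -> Rstar mul A a c -> Rstar mul A b c.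
Proof. intros H1 H2 u v Hu Hv. rewrite <- (H1 u v Hu Hv). apply H2; auto. Qed.
Lemma Lstar_trans3 a b c : Lstar mul A a b -> Lstar mul A a c -> Lstar mul A b c.
Proof. intros H1 H2 u v Hu Hv. rewrite <- (H1 u v Hu Hv). apply H2; auto. Qed.
Lemma Rstar_sym a b : Rstar mul A a b -> Rstar mul A b a.
Proof. intros H. apply (Rstar_trans3 H), Rstar_refl. Qed.
Lemma Lstar_sym a b : Lstar mul A a b -> Lstar mul A b a.
Proof. intros H. apply (Lstar_trans3 H), Lstar_refl. Qed.
Lemma Rstar_trans a b c : Rstar mul A a b -> Rstar mul A b c -> Rstar mul A a c.
Proof. intros H1 H2. apply (Rstar_trans3 (Rstar_sym H1)), H2. Qed.
Lemma Lstar_trans a b c : Lstar mul A a b -> Lstar mul A b c -> Lstar mul A a c.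
Proof. intros H1 H2. apply (Lstar_trans3 (Lstar_sym H1)), H2. Qed.

Lemma Rstar_uniq a e f : A e -> A f -> mul e e = e -> mul f f = f -> mul e f = mul f e ->
  Rstar mul A a e -> Rstar mul A a f -> e = f.
Proof.
  intros He Hf Hee Hff C H1 H2.
  pose proof (Rstar_trans3 H1 H2) as H.
  assert (E1 : mul e f = f). { apply (proj1 (H (Some e) None He I)). simpl. exact Hee. }
  assert (E2 : mul f e = e). { apply (proj2 (H (Some f) None Hf I)). simpl. exact Hff. }
  congruence.
Qed.

Lemma Lstar_uniq a e f : A e -> A f -> mul e e = e -> mul f f = f -> mul e f = mul f e ->
  Lstar mul A a e -> Lstar mul A a f -> e = f.
Proof.
  intros He Hf Hee Hff C H1 H2.
  pose proof (Lstar_trans3 H1 H2) as H.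
  assert (E1 : mul f e = f). { apply (proj1 (H (Some e) None He I)). simpl. exact Hee. }
  assert (E2 : mul e f = e). { apply (proj2 (H (Some f) None Hf I)). simpl. exact Hff. }
  congruence.
Qed.

Lemma Rstar_sub (B : T -> Prop) a b : (forall x, B x -> A x) -> Rstar mul A a b -> Rstar mul B a b.
Proof.
  intros HB H u v Hu Hv. apply H; [destruct u|destruct v]; simpl in *; auto.
Qed.
Lemma Lstar_sub (B : T -> Prop) a b : (forall x, B x -> A x) -> Lstar mul A a b -> Lstar mul B a b.
Proof.
  intros HB H u v Hu Hv. apply H; [destruct u|destruct v]; simpl in *; auto.
Qed.

Lemma GL_refl a : GreenL mul A a a.
Proof. exists None, None; simpl; auto. Qed.
Lemma GR_refl a : GreenR mul A a a.
Proof. exists None, None; simpl; auto. Qed.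

Lemma GL_of a b : A a -> A b -> mul a b = a -> mul b a = b -> GreenL mul A a b.
Proof. intros. exists (Some a), (Some b); simpl; auto. Qed.
Lemma GR_of a b : A a -> A b -> mul b a = a -> mul a b = b -> GreenR mul A a b.
Proof. intros. exists (Some a), (Some b); simpl; auto. Qed.

Hypothesis assoc : forall x y z, A x -> A y -> A z -> mul (mul x y) z = mul x (mul y z).
Hypothesis clos : forall x y, A x -> A y -> A (mul x y).

Lemma lact_ok w z : one_ok A w -> A z -> A (lact mul w z).
Proof. destruct w; simpl; auto. Qed.
Lemma ract_ok w z : one_ok A w -> A z -> A (ract mul z w).
Proof. destruct w; simpl; auto. Qed.

Lemma lact_idem_r u f : one_ok A u -> A f -> mul f f = f -> mul (lact mul u f) f = lact mul u f.
Proof. destruct u; simpl; intros; auto. rewrite assoc by auto. congruence. Qed.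
Lemma ract_idem_l f u : one_ok A u -> A f -> mul f f = f -> mul f (ract mul f u) = ract mul f u.
Proof. destruct u; simpl; intros; auto. rewrite <- assoc by auto. congruence. Qed.

Lemma GL_props a b : A a -> A b -> mul a a = a -> mul b b = b -> GreenL mul A a b ->
  mul a b = a /\ mul b a = b.
Proof.
  intros Ha Hb Haa Hbb [u [v [Hu [Hv [E1 E2]]]]]. split.
  - rewrite E1. apply lact_idem_r; auto.
  - rewrite E2. apply lact_idem_r; auto.
Qed.
Lemma GR_props a b : A a -> A b -> mul a a = a -> mul b b = b -> GreenR mul A a b ->
  mul b a = a /\ mul a b = b.
Proof.
  intros Ha Hb Haa Hbb [u [v [Hu [Hv [E1 E2]]]]]. split.
  - rewrite E1. apply ract_idem_l; auto.
  - rewrite E2. apply ract_idem_l; auto.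
Qed.

Lemma GL_idem_eq a b : A a -> A b -> mul a a = a -> mul b b = b -> mul a b = mul b a ->
  GreenL mul A a b -> a = b.
Proof. intros Ha Hb Haa Hbb C H. destruct (GL_props Ha Hb Haa Hbb H). congruence. Qed.
Lemma GR_idem_eq a b : A a -> A b -> mul a a = a -> mul b b = b -> mul a b = mul b a ->
  GreenR mul A a b -> a = b.
Proof. intros Ha Hb Haa Hbb C H. destruct (GR_props Ha Hb Haa Hbb H). congruence. Qed.

Lemma Rstar_lcong z a b : A z -> A a -> A b -> Rstar mul A a b -> Rstar mul A (mul z a) (mul z b).
Proof.
  intros Hz Ha Hb H u v Hu Hv.
  assert (K : forall w c, one_ok A w -> A c -> lact mul w (mul z c) = mul (lact mul w z) c).
  { intros [w|] c Hw Hc; simpl in *; [rewrite assoc|]; auto. }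
  rewrite !K by auto.
  apply (H (Some (lact mul u z)) (Some (lact mul v z))); simpl; apply lact_ok; auto.
Qed.
Lemma Lstar_rcong z a b : A z -> A a -> A b -> Lstar mul A a b -> Lstar mul A (mul a z) (mul b z).
Proof.
  intros Hz Ha Hb H u v Hu Hv.
  assert (K : forall w c, one_ok A w -> A c -> ract mul (mul c z) w = mul c (ract mul z w)).
  { intros [w|] c Hw Hc; simpl in *; [rewrite assoc|]; auto. }
  rewrite !K by auto.
  apply (H (Some (ract mul z u)) (Some (ract mul z v))); simpl; apply ract_ok; auto.
Qed.
End Gen.

Section Ad.
Variable T0 : Type.
Variable mul0 : T0 -> T0 -> T0.
Variables plus star : T0 -> T0.
Hypothesis assoc0 : forall x y z, mul0 (mul0 x y) z = mul0 x (mul0 y z).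
Hypothesis comm0 : forall e f, mul0 e e = e -> mul0 f f = f -> mul0 e f = mul0 f e.
Hypothesis Hp : forall x, mul0 (plus x) (plus x) = plus x /\ Rstar mul0 (full T0) x (plus x).
Hypothesis Hs : forall x, mul0 (star x) (star x) = star x /\ Lstar mul0 (full T0) x (star x).

Lemma assocF : forall x y z, full T0 x -> full T0 y -> full T0 z -> mul0 (mul0 x y) z = mul0 x (mul0 y z).
Proof. intros; apply assoc0. Qed.
Lemma closF : forall x y, full T0 x -> full T0 y -> full T0 (mul0 x y).
Proof. intros; exact I. Qed.

Lemma pI x : mul0 (plus x) (plus x) = plus x. Proof. apply Hp. Qed.
Lemma sI x : mul0 (star x) (star x) = star x. Proof. apply Hs. Qed.
Lemma F1 x : mul0 (plus x) x = x.
Proof. exact (Rstar_idem I (pI x) (proj2 (Hp x))). Qed.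
Lemma F1' x : mul0 x (star x) = x.
Proof. exact (Lstar_idem I (sI x) (proj2 (Hs x))). Qed.
Lemma F2 e : mul0 e e = e -> plus e = e.
Proof.
  intros He. symmetry.
  apply (@Rstar_uniq _ mul0 (full T0) e e (plus e) I I He (pI e) (comm0 He (pI e))).
  - apply Rstar_refl.
  - apply Hp.
Qed.
Lemma F2' e : mul0 e e = e -> star e = e.
Proof.
  intros He. symmetry.
  apply (@Lstar_uniq _ mul0 (full T0) e e (star e) I I He (sI e) (comm0 He (sI e))).
  - apply Lstar_refl.
  - apply Hs.
Qed.
Lemma F3 x y : mul0 (plus x) (plus (mul0 x y)) = plus (mul0 x y).
Proof.
  apply (proj1 (proj2 (Hp (mul0 x y)) (Some (plus x)) None I I)). simpl.
  rewrite <- assoc0, F1. reflexivity.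
Qed.
Lemma F3b x y : mul0 (plus (mul0 x y)) (plus x) = plus (mul0 x y).
Proof. rewrite comm0 by apply pI. apply F3. Qed.
Lemma F3' x y : mul0 (star (mul0 x y)) (star y) = star (mul0 x y).
Proof.
  apply (proj1 (proj2 (Hs (mul0 x y)) (Some (star y)) None I I)). simpl.
  rewrite assoc0, F1'. reflexivity.
Qed.
Lemma F3b' x y : mul0 (star y) (star (mul0 x y)) = star (mul0 x y).
Proof. rewrite comm0 by apply sI. apply F3'. Qed.

Lemma plus_lact w x : plus (lact mul0 w x) = plus (lact mul0 w (plus x)).
Proof.
  destruct w as [z|]; simpl.
  - apply (@Rstar_uniq _ mul0 (full T0) (mul0 z x) _ _ I I (pI _) (pI _) (comm0 (pI _) (pI _))).
    + apply Hp.
    + apply Rstar_trans with (mul0 z (plus x)).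
      * apply (Rstar_lcong assocF closF); try exact I. apply Hp.
      * apply Hp.
  - rewrite (F2 (pI x)). reflexivity.
Qed.
Lemma star_ract w x : star (ract mul0 x w) = star (ract mul0 (star x) w).
Proof.
  destruct w as [z|]; simpl.
  - apply (@Lstar_uniq _ mul0 (full T0) (mul0 x z) _ _ I I (sI _) (sI _) (comm0 (sI _) (sI _))).
    + apply Hs.
    + apply Lstar_trans with (mul0 (star x) z).
      * apply (Lstar_rcong assocF closF); try exact I. apply Hs.
      * apply Hs.
  - rewrite (F2' (sI x)). reflexivity.
Qed.
Lemma Rl x w w' : lact mul0 w x = lact mul0 w' x <-> lact mul0 w (plus x) = lact mul0 w' (plus x).
Proof. apply (proj2 (Hp x)); apply ok_full. Qed.
Lemma Ll x w w' : ract mul0 x w = ract mul0 x w' <-> ract mul0 (star x) w = ract mul0 (star x) w'.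
Proof. apply (proj2 (Hs x)); apply ok_full. Qed.
Lemma idem_mul e f : mul0 e e = e -> mul0 f f = f -> mul0 (mul0 e f) (mul0 e f) = mul0 e f.
Proof.
  intros He Hf. rewrite assoc0, <- (assoc0 f e f), <- (comm0 He Hf), assoc0, Hf, <- assoc0, He.
  reflexivity.
Qed.
Lemma GL0 a b : mul0 a a = a -> mul0 b b = b -> GreenL mul0 (full T0) a b -> a = b.
Proof. intros Ha Hb H. exact (GL_idem_eq assocF I I Ha Hb (comm0 Ha Hb) H). Qed.
Lemma GR0 a b : mul0 a a = a -> mul0 b b = b -> GreenR mul0 (full T0) a b -> a = b.
Proof. intros Ha Hb H. exact (GR_idem_eq assocF I I Ha Hb (comm0 Ha Hb) H). Qed.
Lemma plus_uniq x e : mul0 e e = e -> Rstar mul0 (full T0) x e -> e = plus x.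
Proof. intros He H. exact (Rstar_uniq I I He (pI x) (comm0 He (pI x)) H (proj2 (Hp x))). Qed.
Lemma star_uniq x e : mul0 e e = e -> Lstar mul0 (full T0) x e -> e = star x.
Proof. intros He H. exact (Lstar_uniq I I He (sI x) (comm0 He (sI x)) H (proj2 (Hs x))). Qed.
End Ad.

Section P1.
Variable T0 : Type.
Variable mul0 : T0 -> T0 -> T0.
Variables plus star : T0 -> T0.
Variable TI : Type. Variable mulI : TI -> TI -> TI. Variable jI : T0 -> TI.
Variable TL : Type. Variable mulL : TL -> TL -> TL. Variable jL : T0 -> TL.
Hypothesis assoc0 : forall x y z, mul0 (mul0 x y) z = mul0 x (mul0 y z).
Hypothesis comm0 : forall e f, mul0 e e = e -> mul0 f f = f -> mul0 e f = mul0 f e.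
Hypothesis Hp : forall x, mul0 (plus x) (plus x) = plus x /\ Rstar mul0 (full T0) x (plus x).
Hypothesis Hs : forall x, mul0 (star x) (star x) = star x /\ Lstar mul0 (full T0) x (star x).
Hypothesis assocI : forall x y z, mulI (mulI x y) z = mulI x (mulI y z).
Hypothesis idemI : forall x, mulI x x = x.
Hypothesis lnI : forall x y z, mulI (mulI x y) z = mulI (mulI x z) y.
Hypothesis assocL : forall x y z, mulL (mulL x y) z = mulL x (mulL y z).
Hypothesis idemL : forall x, mulL x x = x.
Hypothesis rnL : forall x y z, mulL (mulL x y) z = mulL (mulL y x) z.
Hypothesis jhI : forall e f, mul0 e e = e -> mul0 f f = f -> jI (mul0 e f) = mulI (jI e) (jI f).
Hypothesis jhL : forall e f, mul0 e e = e -> mul0 f f = f -> jL (mul0 e f) = mulL (jL e) (jL f).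

Local Notation Wc := (W_carrier plus star mulI jI mulL jL).
Local Notation Wm := (W_mul mul0 plus star mulI jI mulL jL).
Local Notation W := (TI * T0 * TL)%type.

Let pI := pI plus Hp. Let sI := sI star Hs. Let F1 := F1 plus Hp. Let F1' := F1' star Hs.
Let F2 := F2 plus comm0 Hp. Let F2' := F2' star comm0 Hs.
Let F3 := F3 plus assoc0 Hp. Let F3b := F3b plus assoc0 comm0 Hp.
Let F3' := F3' star assoc0 Hs. Let F3b' := F3b' star assoc0 comm0 Hs.
Let plus_lact := plus_lact plus assoc0 comm0 Hp. Let star_ract := star_ract star assoc0 comm0 Hs.
Let Rl := Rl plus Hp. Let Ll := Ll star Hs.
Let plus_uniq := plus_uniq plus comm0 Hp. Let star_uniq := star_uniq star comm0 Hs.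

Lemma assocIF : forall x y z, full TI x -> full TI y -> full TI z -> mulI (mulI x y) z = mulI x (mulI y z).
Proof. intros; apply assocI. Qed.
Lemma assocLF : forall x y z, full TL x -> full TL y -> full TL z -> mulL (mulL x y) z = mulL x (mulL y z).
Proof. intros; apply assocL. Qed.

Lemma Wc_iff e x f : Wc (e,x,f) <->
  (mulI e (jI (plus x)) = e /\ mulI (jI (plus x)) e = jI (plus x)) /\
  (mulL (jL (star x)) f = f /\ mulL f (jL (star x)) = jL (star x)).
Proof.
  simpl. split.
  - intros [H1 H2]. split.
    + exact (GL_props assocIF I I (idemI _) (idemI _) H1).
    + exact (GR_props assocLF I I (idemL _) (idemL _) H2).
  - intros [[H1 H2] [H3 H4]]. split.
    + apply GL_of; auto; exact I.
    + apply GR_of; auto; exact I.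
Qed.

Lemma lnI_abs c a p : mulI a p = a -> mulI p a = p -> mulI c a = mulI c p.
Proof. intros H1 H2. rewrite <- H1 at 1. rewrite <- assocI, lnI, assocI, H2. reflexivity. Qed.
Lemma rnL_abs c a p : mulL p a = a -> mulL a p = p -> mulL a c = mulL p c.
Proof. intros H1 H2. rewrite <- H1 at 1. rewrite rnL, H2. reflexivity. Qed.

Lemma Wc_mul w1 w2 : Wc w1 -> Wc w2 -> Wc (Wm w1 w2).
Proof.
  destruct w1 as [[e x] f]; destruct w2 as [[g y] h].
  intros H1 H2. apply Wc_iff in H1. apply Wc_iff in H2.
  destruct H1 as [[A1 A2] _]. destruct H2 as [_ [B1 B2]].
  change (Wc (mulI e (jI (plus (mul0 x y))), mul0 x y, mulL (jL (star (mul0 x y))) h)).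
  apply Wc_iff. split; split.
  - rewrite assocI, idemI. reflexivity.
  - rewrite <- assocI, (lnI_abs _ A1 A2), <- jhI, F3b, idemI; auto.
  - rewrite <- assocL, idemL. reflexivity.
  - rewrite assocL, (rnL_abs _ B1 B2), <- jhL, F3b'; auto.
Qed.

Lemma Wm_assoc a b c : Wm (Wm a b) c = Wm a (Wm b c).
Proof.
  destruct a as [[e x] f]; destruct b as [[g y] h]; destruct c as [[k z] l]. simpl.
  rewrite assocI, <- jhI by auto. rewrite F3.
  rewrite <- assocL, <- jhL by auto. rewrite F3', assoc0. reflexivity.
Qed.

Definition mid (w : W) : T0 := snd (fst w).
Definition omid (u : option W) : option T0 := match u with None => None | Some w => Some (mid w) end.
Definition ofst (u : option W) e := match u with None => e | Some w => fst (fst w) end.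
Definition olst (u : option W) f := match u with None => f | Some w => snd w end.

Lemma mid_mul a b : mid (Wm a b) = mul0 (mid a) (mid b).
Proof. destruct a as [[e x] f]; destruct b as [[g y] h]. reflexivity. Qed.
Lemma mid_lact u w : mid (lact Wm u w) = lact mul0 (omid u) (mid w).
Proof. destruct u; simpl; [apply mid_mul|reflexivity]. Qed.
Lemma mid_ract w u : mid (ract Wm w u) = ract mul0 (mid w) (omid u).
Proof. destruct u; simpl; [apply mid_mul|reflexivity]. Qed.

Lemma lact_form u e x f : Wc (e,x,f) -> lact Wm u (e,x,f) =
  (mulI (ofst u e) (jI (plus (lact mul0 (omid u) x))), lact mul0 (omid u) x,
   mulL (jL (star (lact mul0 (omid u) x))) f).
Proof.
  intros H. apply Wc_iff in H. destruct H as [[A1 _] [B1 _]].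
  destruct u as [[[a z] b]|]; simpl; [reflexivity|]. rewrite A1, B1. reflexivity.
Qed.
Lemma ract_form u e x f : Wc (e,x,f) -> ract Wm (e,x,f) u =
  (mulI e (jI (plus (ract mul0 x (omid u)))), ract mul0 x (omid u),
   mulL (jL (star (ract mul0 x (omid u)))) (olst u f)).
Proof.
  intros H. apply Wc_iff in H. destruct H as [[A1 _] [B1 _]].
  destruct u as [[[a z] b]|]; simpl; [reflexivity|]. rewrite A1, B1. reflexivity.
Qed.

Lemma WcE e x f : Wc (e,x,f) -> Wc (e, plus x, jL (plus x)).
Proof.
  intros H. apply Wc_iff in H. apply Wc_iff. rewrite (F2 (pI x)), (F2' (pI x)), idemL. tauto.
Qed.
Lemma WcF e x f : Wc (e,x,f) -> Wc (jI (star x), star x, f).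
Proof.
  intros H. apply Wc_iff in H. apply Wc_iff. rewrite (F2 (sI x)), (F2' (sI x)), idemI. tauto.
Qed.

Lemma R_W e x f : Wc (e,x,f) -> Rstar Wm Wc (e,x,f) (e, plus x, jL (plus x)).
Proof.
  intros H u v Hu Hv. rewrite !lact_form by (auto; apply (WcE H)).
  rewrite (plus_lact (omid u) x), (plus_lact (omid v) x).
  split; intro K; injection K as K1 K2 K3.
  - apply Rl in K2. rewrite K1, K2. reflexivity.
  - apply Rl in K2. rewrite K1, K2. reflexivity.
Qed.

Lemma L_W e x f : Wc (e,x,f) -> Lstar Wm Wc (e,x,f) (jI (star x), star x, f).
Proof.
  intros H u v Hu Hv. rewrite !ract_form by (auto; apply (WcF H)).
  rewrite (star_ract (omid u) x), (star_ract (omid v) x).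
  split; intro K; injection K as K1 K2 K3.
  - apply Ll in K2. rewrite K2. rewrite K2 in K3. rewrite K3. reflexivity.
  - apply Ll in K2. rewrite K2. rewrite K3. reflexivity.
Qed.

Lemma idemE e x f : Wc (e,x,f) -> idem Wm Wc (e, plus x, jL (plus x)).
Proof.
  intros H. split; [apply (WcE H)|].
  apply Wc_iff in H. destruct H as [[A1 _] _].
  simpl. rewrite pI, (F2 (pI x)), (F2' (pI x)), idemL, A1. reflexivity.
Qed.
Lemma idemF e x f : Wc (e,x,f) -> idem Wm Wc (jI (star x), star x, f).
Proof.
  intros H. split; [apply (WcF H)|].
  apply Wc_iff in H. destruct H as [_ [B1 _]].
  simpl. rewrite sI, (F2 (sI x)), (F2' (sI x)), idemI, B1. reflexivity.
Qed.

Lemma idem_mid w : idem Wm Wc w -> mul0 (mid w) (mid w) = mid w.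
Proof. intros [_ H]. rewrite <- mid_mul, H. reflexivity. Qed.

Lemma W_abundant : abundant Wm Wc.
Proof.
  split; [split; [apply Wc_mul | intros; apply Wm_assoc]|].
  intros [[e x] f] H. split.
  - exists (e, plus x, jL (plus x)). split; [apply (idemE H)|apply (R_W H)].
  - exists (jI (star x), star x, f). split; [apply (idemF H)|apply (L_W H)].
Qed.

Lemma W_qa : quasi_adequate Wm Wc.
Proof.
  split; [apply W_abundant|].
  intros w1 w2 H1 H2. pose proof (idem_mid H1) as M1. pose proof (idem_mid H2) as M2.
  destruct H1 as [C1 _]. destruct H2 as [C2 _]. split; [apply Wc_mul; assumption|].
  destruct w1 as [[e x] f]; destruct w2 as [[g y] h]. unfold mid in M1, M2; simpl in M1, M2. simpl.
  rewrite (idem_mul mul0 assoc0 comm0 M1 M2), assocI, idemI, <- assocL, idemL. reflexivity.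
Qed.

Definition phi (x : T0) : W := (jI (plus x), x, jL (star x)).
Definition UU (w : W) : Prop := fst (fst w) = jI (plus (mid w)) /\ snd w = jL (star (mid w)).

Lemma U_phi w : UU w -> w = phi (mid w).
Proof. destruct w as [[e x] f]. unfold UU, phi, mid; simpl. intros [-> ->]. reflexivity. Qed.
Lemma phi_U x : UU (phi x). Proof. split; reflexivity. Qed.
Lemma phi_Wc x : Wc (phi x). Proof. split; [apply GL_refl|apply GR_refl]. Qed.
Lemma U_Wc w : UU w -> Wc w. Proof. intros H. rewrite (U_phi H). apply phi_Wc. Qed.
Lemma phi_mul x y : Wm (phi x) (phi y) = phi (mul0 x y).
Proof. unfold phi. simpl. rewrite <- jhI, <- jhL, F3, F3' by auto. reflexivity. Qed.
Lemma phi_inj x y : phi x = phi y -> x = y.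
Proof. unfold phi. intro H. injection H. auto. Qed.
Lemma phi_plus x : phi (plus x) = (jI (plus x), plus x, jL (plus x)).
Proof. unfold phi. rewrite (F2 (pI x)), (F2' (pI x)). reflexivity. Qed.
Lemma phi_star x : phi (star x) = (jI (star x), star x, jL (star x)).
Proof. unfold phi. rewrite (F2 (sI x)), (F2' (sI x)). reflexivity. Qed.
Lemma mid_phi x : mid (phi x) = x. Proof. reflexivity. Qed.

Lemma R_U x : Rstar Wm UU (phi x) (phi (plus x)).
Proof. apply Rstar_sub with Wc; [apply U_Wc|]. rewrite phi_plus. apply (R_W (phi_Wc x)). Qed.
Lemma L_U x : Lstar Wm UU (phi x) (phi (star x)).
Proof. apply Lstar_sub with Wc; [apply U_Wc|]. rewrite phi_star. apply (L_W (phi_Wc x)). Qed.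

Lemma idem_phi x : mul0 x x = x -> idem Wm UU (phi x).
Proof. intros H. split; [apply phi_U|]. rewrite phi_mul, H. reflexivity. Qed.

Lemma U_abundant : abundant Wm UU.
Proof.
  split; [split|].
  - intros a b Ha Hb. rewrite (U_phi Ha), (U_phi Hb), phi_mul. apply phi_U.
  - intros; apply Wm_assoc.
  - intros a Ha. rewrite (U_phi Ha). split.
    + exists (phi (plus (mid a))). split; [apply idem_phi, pI|apply R_U].
    + exists (phi (star (mid a))). split; [apply idem_phi, sI|apply L_U].
Qed.

Lemma U_comm e f : idem Wm UU e -> idem Wm UU f -> Wm e f = Wm f e.
Proof.
  intros [He E1] [Hf E2]. rewrite (U_phi He), (U_phi Hf) in *. rewrite !phi_mul in *.
  apply phi_inj in E1. apply phi_inj in E2. rewrite comm0 by auto. reflexivity.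
Qed.

Lemma U_adequate : adequate Wm UU.
Proof. split; [apply U_abundant|apply U_comm]. Qed.

Definition omphi (u : option T0) : option W := match u with None => None | Some z => Some (phi z) end.
Lemma omphi_ok u : one_ok UU (omphi u). Proof. destruct u; simpl; [apply phi_U|exact I]. Qed.
Lemma lact_phi u x : lact Wm (omphi u) (phi x) = phi (lact mul0 u x).
Proof. destruct u; simpl; [apply phi_mul|reflexivity]. Qed.
Lemma ract_phi u x : ract Wm (phi x) (omphi u) = phi (ract mul0 x u).
Proof. destruct u; simpl; [apply phi_mul|reflexivity]. Qed.

Lemma phi_eq_iff x y : phi x = phi y <-> x = y.
Proof. split; [apply phi_inj|intros ->; reflexivity]. Qed.

Lemma LU_0 x y : Lstar Wm UU (phi x) (phi y) -> Lstar mul0 (full T0) x y.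
Proof.
  intros H u v _ _. pose proof (H (omphi u) (omphi v) (omphi_ok u) (omphi_ok v)) as K.
  rewrite !ract_phi, !phi_eq_iff in K. exact K.
Qed.
Lemma RU_0 x y : Rstar Wm UU (phi x) (phi y) -> Rstar mul0 (full T0) x y.
Proof.
  intros H u v _ _. pose proof (H (omphi u) (omphi v) (omphi_ok u) (omphi_ok v)) as K.
  rewrite !lact_phi, !phi_eq_iff in K. exact K.
Qed.

Lemma star_L x y w : Lstar mul0 (full T0) x y -> star (ract mul0 x w) = star (ract mul0 y w).
Proof.
  intros H. apply (star_uniq (sI _)).
  apply Lstar_trans with (ract mul0 x w).
  - destruct w; simpl; [|apply Lstar_sym; exact H].
    apply Lstar_sym, (Lstar_rcong (assocF mul0 assoc0) (closF mul0)); try exact I. exact H.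
  - apply Hs.
Qed.
Lemma plus_R x y w : Rstar mul0 (full T0) x y -> plus (lact mul0 w x) = plus (lact mul0 w y).
Proof.
  intros H. apply (plus_uniq (pI _)).
  apply Rstar_trans with (lact mul0 w x).
  - destruct w; simpl; [|apply Rstar_sym; exact H].
    apply Rstar_sym, (Rstar_lcong (assocF mul0 assoc0) (closF mul0)); try exact I. exact H.
  - apply Hp.
Qed.

Lemma LU_W x y : Lstar Wm UU (phi x) (phi y) -> Lstar Wm Wc (phi x) (phi y).
Proof.
  intros H. apply LU_0 in H. intros u v Hu Hv. unfold phi.
  rewrite !ract_form by apply phi_Wc.
  pose proof (star_L (omid u) H) as Su. pose proof (star_L (omid v) H) as Sv.
  pose proof (star_L None H) as S0. simpl in S0.
  assert (Hm : ract mul0 x (omid u) = ract mul0 x (omid v) <-> ract mul0 y (omid u) = ract mul0 y (omid v))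
    by (apply H; apply ok_full).
  rewrite Su, Sv, S0.
  split; intro K; injection K as K1 K2 K3.
  - apply Hm in K2. rewrite K3, K2. reflexivity.
  - apply Hm in K2. rewrite K3, K2. reflexivity.
Qed.
Lemma RU_W x y : Rstar Wm UU (phi x) (phi y) -> Rstar Wm Wc (phi x) (phi y).
Proof.
  intros H. apply RU_0 in H. intros u v Hu Hv. unfold phi.
  rewrite !lact_form by apply phi_Wc.
  pose proof (plus_R (omid u) H) as Su. pose proof (plus_R (omid v) H) as Sv.
  pose proof (plus_R None H) as S0. simpl in S0.
  assert (Hm : lact mul0 (omid u) x = lact mul0 (omid v) x <-> lact mul0 (omid u) y = lact mul0 (omid v) y)
    by (apply H; apply ok_full).
  rewrite Su, Sv, S0.
  split; intro K; injection K as K1 K2 K3.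
  - apply Hm in K2. rewrite K1, K2. reflexivity.
  - apply Hm in K2. rewrite K1, K2. reflexivity.
Qed.

Lemma U_star : star_subsemigroup Wm Wc UU.
Proof.
  split; [apply U_Wc|]. split; [apply U_abundant|].
  intros a b Ha Hb. rewrite (U_phi Ha), (U_phi Hb). split; split.
  - apply LU_W.
  - apply Lstar_sub, U_Wc.
  - apply RU_W.
  - apply Rstar_sub, U_Wc.
Qed.

Lemma bar_ex w : Wc w -> bar_rel Wm Wc UU w (phi (mid w)).
Proof.
  destruct w as [[e x] f]. intros H. unfold mid; simpl. split; [apply phi_U|].
  exists (e, plus x, jL (plus x)), (jI (star x), star x, f).
  split; [apply (idemE H)|]. split; [apply (idemF H)|].
  pose proof H as H'. apply Wc_iff in H'. destruct H' as [[A1 A2] [B1 B2]].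
  split; [|split].
  - unfold phi. simpl. rewrite F1, F1', A1, A1, B1. reflexivity.
  - exists (phi (plus x)). split; [apply idem_phi, pI|]. split; [apply R_U|].
    rewrite phi_plus. apply GL_of.
    + apply (WcE H).
    + rewrite <- phi_plus. apply phi_Wc.
    + simpl. rewrite pI, (F2 (pI x)), (F2' (pI x)), idemL, A1. reflexivity.
    + simpl. rewrite pI, (F2 (pI x)), (F2' (pI x)), idemL, idemI. reflexivity.
  - exists (phi (star x)). split; [apply idem_phi, sI|]. split; [apply L_U|].
    rewrite phi_star. apply GR_of.
    + apply (WcF H).
    + rewrite <- phi_star. apply phi_Wc.
    + simpl. rewrite sI, (F2 (sI x)), (F2' (sI x)), idemI, B1. reflexivity.
    + simpl. rewrite sI, (F2 (sI x)), (F2' (sI x)), idemL, idemI. reflexivity.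
Qed.

Lemma bar_un w xb : bar_rel Wm Wc UU w xb -> xb = phi (mid w).
Proof.
  intros [Hxb [E [F [HE [HF [Hw [[p [Hp1 [Hp2 Hp3]]] [q [Hq1 [Hq2 Hq3]]]]]]]]]].
  rewrite (U_phi Hxb) in *. set (y := mid xb) in *. clearbody y.
  assert (Pp : p = phi (plus y)).
  { apply (@Rstar_uniq _ Wm UU (phi y) p (phi (plus y)) (proj1 Hp1) (phi_U _) (proj2 Hp1) (proj2 (idem_phi (pI y)))).
    - apply U_comm; [exact Hp1|apply idem_phi, pI].
    - exact Hp2.
    - apply R_U. }
  assert (Pq : q = phi (star y)).
  { apply (@Lstar_uniq _ Wm UU (phi y) q (phi (star y)) (proj1 Hq1) (phi_U _) (proj2 Hq1) (proj2 (idem_phi (sI y)))).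
    - apply U_comm; [exact Hq1|apply idem_phi, sI].
    - exact Hq2.
    - apply L_U. }
  subst p q.
  assert (ME : mid E = plus y).
  { destruct Hp3 as [u [v [_ [_ [E1 E2]]]]].
    apply (GL0 assoc0 comm0 (idem_mid HE) (pI y)).
    exists (omid u), (omid v). split; [apply ok_full|]. split; [apply ok_full|].
    rewrite E1 at 1. rewrite mid_lact. split; [reflexivity|].
    rewrite <- (mid_phi (plus y)) at 1. rewrite E2, mid_lact. reflexivity. }
  assert (MF : mid F = star y).
  { destruct Hq3 as [u [v [_ [_ [E1 E2]]]]].
    apply (GR0 assoc0 comm0 (idem_mid HF) (sI y)).
    exists (omid u), (omid v). split; [apply ok_full|]. split; [apply ok_full|].
    rewrite E1 at 1. rewrite mid_ract. split; [reflexivity|].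
    rewrite <- (mid_phi (star y)) at 1. rewrite E2, mid_ract. reflexivity. }
  rewrite Hw, !mid_mul, ME, MF, mid_phi, F1, F1'. reflexivity.
Qed.

Arguments bar_ex [w] _.
Arguments bar_un [w xb] _.
Arguments Wc_mul [w1 w2] _ _.

Lemma U_transversal : adequate_transversal Wm Wc UU.
Proof.
  split; [apply U_adequate|]. split; [apply U_star|].
  intros w Hw. exists (phi (mid w)). split; [apply (bar_ex Hw)|].
  intros xb H. symmetry. apply (bar_un H).
Qed.

Lemma U_qi : quasi_ideal Wm Wc UU.
Proof.
  intros a s b Ha Hs0 Hb. rewrite (U_phi Ha), (U_phi Hb).
  set (x := mid a). set (y := mid b). destruct s as [[g z] h].
  unfold phi. split; simpl.
  - rewrite <- jhI by apply pI. rewrite F3. rewrite <- jhI by apply pI. rewrite F3. reflexivity.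
  - rewrite <- jhL by apply sI. rewrite F3'. reflexivity.
Qed.

Lemma U_adm : admissible Wm Wc UU.
Proof.
  intros x y xb yb Hx Hy H1 H2.
  rewrite (bar_un H1), (bar_un H2), phi_mul, <- mid_mul.
  apply bar_ex, Wc_mul; auto.
Qed.

Lemma U_iso : iso mul0 (full T0) Wm UU.
Proof.
  exists phi. split; [intros; apply phi_U|]. split; [intros x y _ _; apply phi_inj|].
  split; [intros w Hw; exists (mid w); split; [exact I|symmetry; apply U_phi; exact Hw]|].
  intros; symmetry; apply phi_mul.
Qed.

Lemma part1_sec : quasi_adequate Wm Wc /\ exists U : W -> Prop,
  adequate_transversal Wm Wc U /\ quasi_ideal Wm Wc U /\ admissible Wm Wc U /\ iso mul0 (full T0) Wm U.
Proof.
  split; [apply W_qa|]. exists UU. split; [apply U_transversal|].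
  split; [apply U_qi|]. split; [apply U_adm|apply U_iso].
Qed.
End P1.

Definition cid := @constructive_indefinite_description.
Definition omap {X Y : Type} (g : X -> Y) (u : option X) : option Y :=
  match u with None => None | Some x => Some (g x) end.

Section P2.
Variable T : Type.
Variable mul : T -> T -> T.
Variable U : T -> Prop.
Hypothesis HQ : quasi_adequate mul (full T).
Hypothesis HT : adequate_transversal mul (full T) U.
Hypothesis HQI : quasi_ideal mul (full T) U.
Hypothesis HAd : admissible mul (full T) U.
Local Notation F := (full T).

Lemma assoc x y z : mul (mul x y) z = mul x (mul y z).
Proof. apply (proj2 (proj1 (proj1 HQ))); exact I. Qed.
Lemma assocF' : forall x y z, F x -> F y -> F z -> mul (mul x y) z = mul x (mul y z).
Proof. intros; apply assoc. Qed.
Lemma assocU : forall x y z, U x -> U y -> U z -> mul (mul x y) z = mul x (mul y z).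
Proof. intros; apply assoc. Qed.
Lemma Eclos e f : mul e e = e -> mul f f = f -> mul (mul e f) (mul e f) = mul e f.
Proof. intros He Hf. apply (proj2 HQ e f (conj I He) (conj I Hf)). Qed.
Lemma Uclos x y : U x -> U y -> U (mul x y).
Proof. destruct HT as [[[[H _] _] _] _]. apply H. Qed.
Lemma Ucomm e f : U e -> U f -> mul e e = e -> mul f f = f -> mul e f = mul f e.
Proof. destruct HT as [[_ H] _]. intros; apply H; split; auto. Qed.
Lemma Uab a : U a -> (exists e, idem mul U e /\ Rstar mul U a e) /\ (exists f, idem mul U f /\ Lstar mul U a f).
Proof. destruct HT as [[[_ H] _] _]. apply H. Qed.
Lemma RUF a b : U a -> U b -> Rstar mul U a b -> Rstar mul F a b.
Proof. destruct HT as [_ [[_ [_ H]] _]]. intros Ha Hb. apply (H a b Ha Hb). Qed.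
Lemma LUF a b : U a -> U b -> Lstar mul U a b -> Lstar mul F a b.
Proof. destruct HT as [_ [[_ [_ H]] _]]. intros Ha Hb. apply (H a b Ha Hb). Qed.
Lemma bar_ex1 x : exists xb, bar_rel mul F U x xb.
Proof. destruct HT as [_ [_ H]]. destruct (H x I) as [xb [Hx _]]. eauto. Qed.
Lemma bar_uq x a b : bar_rel mul F U x a -> bar_rel mul F U x b -> a = b.
Proof.
  destruct HT as [_ [_ H]]. destruct (H x I) as [xb [Hx Hu]]. intros Ha Hb.
  rewrite <- (Hu a Ha), <- (Hu b Hb). reflexivity.
Qed.

Lemma lact_mul w a b : lact mul w (mul a b) = mul (lact mul w a) b.
Proof. destruct w; simpl; [rewrite assoc|]; reflexivity. Qed.
Lemma ract_mul w a b : ract mul (mul a b) w = mul a (ract mul b w).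
Proof. destruct w; simpl; [rewrite assoc|]; reflexivity. Qed.

Lemma GL_rcong a b c : GreenL mul F a b -> GreenL mul F (mul a c) (mul b c).
Proof.
  intros [u [v [Hu [Hv [E1 E2]]]]]. exists u, v. split; [exact Hu|]. split; [exact Hv|].
  rewrite !lact_mul, <- E1, <- E2. auto.
Qed.
Lemma GR_lcong a b c : GreenR mul F a b -> GreenR mul F (mul c a) (mul c b).
Proof.
  intros [u [v [Hu [Hv [E1 E2]]]]]. exists u, v. split; [exact Hu|]. split; [exact Hv|].
  rewrite !ract_mul, <- E1, <- E2. auto.
Qed.

Lemma GLp e p : mul e e = e -> mul p p = p -> GreenL mul F e p -> mul e p = e /\ mul p e = p.
Proof. intros. exact (GL_props assocF' I I H H0 H1). Qed.
Lemma GRp f q : mul f f = f -> mul q q = q -> GreenR mul F f q -> mul q f = f /\ mul f q = q.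
Proof. intros. exact (GR_props assocF' I I H H0 H1). Qed.

Lemma GL_uniqE e p p' : mul e e = e -> U p -> U p' -> mul p p = p -> mul p' p' = p' ->
  GreenL mul F e p -> GreenL mul F e p' -> p = p'.
Proof.
  intros He Up Up' Hp Hp' H1 H2.
  destruct (GLp He Hp H1) as [A1 A2]. destruct (GLp He Hp' H2) as [B1 B2].
  assert (C1 : mul p p' = p) by (rewrite <- A2 at 1; rewrite assoc, B1; exact A2).
  assert (C2 : mul p' p = p') by (rewrite <- B2 at 1; rewrite assoc, A1; exact B2).
  rewrite <- C1, Ucomm; auto.
Qed.
Lemma GR_uniqE f q q' : mul f f = f -> U q -> U q' -> mul q q = q -> mul q' q' = q' ->
  GreenR mul F f q -> GreenR mul F f q' -> q = q'.
Proof.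
  intros He Up Up' Hp Hp' H1 H2.
  destruct (GRp He Hp H1) as [A1 A2]. destruct (GRp He Hp' H2) as [B1 B2].
  assert (C1 : mul q' q = q) by (rewrite <- A2 at 1; rewrite <- assoc, B1; exact A2).
  assert (C2 : mul q q' = q') by (rewrite <- B2 at 1; rewrite <- assoc, A1; exact B2).
  rewrite <- C2, Ucomm; auto.
Qed.

Lemma Ridem_GL_eq e e' p : mul e e = e -> mul e' e' = e' -> mul p p = p ->
  Rstar mul F e e' -> GreenL mul F e p -> GreenL mul F e' p -> e = e'.
Proof.
  intros He He' Hp R G1 G2.
  assert (E1 : mul e e' = e') by (apply (proj1 (R (Some e) None I I)); exact He).
  destruct (GLp He Hp G1) as [A1 A2]. destruct (GLp He' Hp G2) as [B1 B2].
  assert (E2 : mul e e' = e) by (rewrite <- A1 at 1; rewrite assoc, B2; exact A1).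
  congruence.
Qed.
Lemma Lidem_GR_eq f f' q : mul f f = f -> mul f' f' = f' -> mul q q = q ->
  Lstar mul F f f' -> GreenR mul F f q -> GreenR mul F f' q -> f = f'.
Proof.
  intros He He' Hp R G1 G2.
  assert (E1 : mul f' f = f') by (apply (proj1 (R (Some f) None I I)); exact He).
  destruct (GRp He Hp G1) as [A1 A2]. destruct (GRp He' Hp G2) as [B1 B2].
  assert (E2 : mul f' f = f) by (rewrite <- A1 at 1; rewrite <- assoc, B2; exact A1).
  congruence.
Qed.

Lemma dec_R x z e f p q : U z -> mul e e = e -> mul f f = f -> x = mul (mul e z) f ->
  U p -> mul p p = p -> Rstar mul U z p -> GreenL mul F e p ->
  U q -> mul q q = q -> Lstar mul U z q -> GreenR mul F f q -> Rstar mul F x e.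
Proof.
  intros Uz He Hf Hx Up Hp Rp Gp Uq Hq Lq Gq u v _ _.
  destruct (GLp He Hp Gp) as [A1 A2]. destruct (GRp Hf Hq Gq) as [B1 B2].
  assert (Zq : mul z q = z) by exact (Lstar_idem Uq Hq Lq).
  assert (Xq : mul x q = mul e z) by (rewrite Hx, assoc, B2, assoc, Zq; reflexivity).
  assert (RF : Rstar mul F z p) by (apply RUF; auto).
  split; intro K.
  - assert (K2 : mul (lact mul u e) z = mul (lact mul v e) z).
    { rewrite <- !lact_mul, <- Xq, !lact_mul, K. reflexivity. }
    apply (RF (Some (lact mul u e)) (Some (lact mul v e)) I I) in K2. simpl in K2.
    rewrite <- !lact_mul, A1 in K2. exact K2.
  - rewrite Hx, !lact_mul, K. reflexivity.
Qed.
Lemma dec_L x z e f p q : U z -> mul e e = e -> mul f f = f -> x = mul (mul e z) f ->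
  U p -> mul p p = p -> Rstar mul U z p -> GreenL mul F e p ->
  U q -> mul q q = q -> Lstar mul U z q -> GreenR mul F f q -> Lstar mul F x f.
Proof.
  intros Uz He Hf Hx Up Hp Rp Gp Uq Hq Lq Gq u v _ _.
  destruct (GLp He Hp Gp) as [A1 A2]. destruct (GRp Hf Hq Gq) as [B1 B2].
  assert (Zp : mul p z = z) by exact (Rstar_idem Up Hp Rp).
  assert (Xp : mul p x = mul z f) by (rewrite Hx, <- !assoc, A2, Zp; reflexivity).
  assert (LF : Lstar mul F z q) by (apply LUF; auto).
  split; intro K.
  - assert (K2 : mul z (ract mul f u) = mul z (ract mul f v)).
    { rewrite <- !ract_mul, <- Xp, !ract_mul, K. reflexivity. }
    apply (LF (Some (ract mul f u)) (Some (ract mul f v)) I I) in K2. simpl in K2.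
    rewrite <- !ract_mul, B1 in K2. exact K2.
  - rewrite Hx, !ract_mul, K. reflexivity.
Qed.

Definition T0 := sig U.
Definition mul0 (a b : T0) : T0 := exist U (mul (proj1_sig a) (proj1_sig b)) (Uclos (proj2_sig a) (proj2_sig b)).

Lemma val_inj (a b : T0) : proj1_sig a = proj1_sig b -> a = b.
Proof. destruct a, b; simpl. intros ->. f_equal. apply proof_irrelevance. Qed.
Lemma eqv (a b : T0) : a = b <-> proj1_sig a = proj1_sig b.
Proof. split; [intros ->; reflexivity|apply val_inj]. Qed.
Lemma val_lact w (a : T0) : proj1_sig (lact mul0 w a) = lact mul (omap (@proj1_sig _ _) w) (proj1_sig a).
Proof. destruct w; reflexivity. Qed.
Lemma val_ract w (a : T0) : proj1_sig (ract mul0 a w) = ract mul (proj1_sig a) (omap (@proj1_sig _ _) w).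
Proof. destruct w; reflexivity. Qed.
Lemma omap_ok (w : option T0) : one_ok U (omap (@proj1_sig _ _) w).
Proof. destruct w as [[x Hx]|]; simpl; auto. Qed.
Lemma lift_opt (u : option T) : one_ok U u -> exists w : option T0, u = omap (@proj1_sig _ _) w.
Proof. destruct u as [x|]; simpl; intros H; [exists (Some (exist U x H))|exists None]; reflexivity. Qed.

Lemma R0_iff (a b : T0) : Rstar mul0 (full T0) a b <-> Rstar mul U (proj1_sig a) (proj1_sig b).
Proof.
  split.
  - intros H u v Hu Hv. destruct (lift_opt u Hu) as [w ->]. destruct (lift_opt v Hv) as [w' ->].
    pose proof (H w w' (ok_full w) (ok_full w')) as K. rewrite !eqv, !val_lact in K. exact K.
  - intros H w w' _ _. rewrite !eqv, !val_lact. apply H; apply omap_ok.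
Qed.
Lemma L0_iff (a b : T0) : Lstar mul0 (full T0) a b <-> Lstar mul U (proj1_sig a) (proj1_sig b).
Proof.
  split.
  - intros H u v Hu Hv. destruct (lift_opt u Hu) as [w ->]. destruct (lift_opt v Hv) as [w' ->].
    pose proof (H w w' (ok_full w) (ok_full w')) as K. rewrite !eqv, !val_ract in K. exact K.
  - intros H w w' _ _. rewrite !eqv, !val_ract. apply H; apply omap_ok.
Qed.

Definition pU_sig (a : T0) : {e | idem mul U e /\ Rstar mul U (proj1_sig a) e} :=
  cid _ (proj1 (Uab (proj2_sig a))).
Definition plus0 (a : T0) : T0 := exist U (proj1_sig (pU_sig a)) (proj1 (proj1 (proj2_sig (pU_sig a)))).
Definition sU_sig (a : T0) : {e | idem mul U e /\ Lstar mul U (proj1_sig a) e} :=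
  cid _ (proj2 (Uab (proj2_sig a))).
Definition star0 (a : T0) : T0 := exist U (proj1_sig (sU_sig a)) (proj1 (proj1 (proj2_sig (sU_sig a)))).

Arguments plus0 : simpl never.
Arguments star0 : simpl never.

Lemma plus0_spec a : mul (proj1_sig (plus0 a)) (proj1_sig (plus0 a)) = proj1_sig (plus0 a) /\
  Rstar mul U (proj1_sig a) (proj1_sig (plus0 a)).
Proof. unfold plus0; simpl. destruct (proj2_sig (pU_sig a)) as [[_ H1] H2]. auto. Qed.
Lemma star0_spec a : mul (proj1_sig (star0 a)) (proj1_sig (star0 a)) = proj1_sig (star0 a) /\
  Lstar mul U (proj1_sig a) (proj1_sig (star0 a)).
Proof. unfold star0; simpl. destruct (proj2_sig (sU_sig a)) as [[_ H1] H2]. auto. Qed.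

Lemma assoc0 : forall x y z : T0, mul0 (mul0 x y) z = mul0 x (mul0 y z).
Proof. intros. apply val_inj. simpl. apply assoc. Qed.
Lemma comm0 : forall e f : T0, mul0 e e = e -> mul0 f f = f -> mul0 e f = mul0 f e.
Proof.
  intros e f He Hf. rewrite eqv in He, Hf. apply val_inj. simpl in *.
  apply Ucomm; auto; apply proj2_sig.
Qed.
Lemma Hp0 : forall x, mul0 (plus0 x) (plus0 x) = plus0 x /\ Rstar mul0 (full T0) x (plus0 x).
Proof. intros x. destruct (plus0_spec x). split; [apply val_inj; auto|apply R0_iff; auto]. Qed.
Lemma Hs0 : forall x, mul0 (star0 x) (star0 x) = star0 x /\ Lstar mul0 (full T0) x (star0 x).
Proof. intros x. destruct (star0_spec x). split; [apply val_inj; auto|apply L0_iff; auto]. Qed.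

Lemma T0_adequate : adequate mul0 (full T0).
Proof.
  split; [split; [split|]|].
  - intros; exact I.
  - intros; apply assoc0.
  - intros a _. split.
    + exists (plus0 a). split; [split; [exact I|apply Hp0]|apply Hp0].
    + exists (star0 a). split; [split; [exact I|apply Hs0]|apply Hs0].
  - intros e f [_ He] [_ Hf]. apply comm0; auto.
Qed.

Lemma p_nf (z : T0) p : U p -> mul p p = p -> Rstar mul U (proj1_sig z) p -> p = proj1_sig (plus0 z).
Proof.
  intros Up Hp R. destruct (plus0_spec z) as [H1 H2].
  apply (@Rstar_uniq _ mul U (proj1_sig z) _ _ Up (proj2_sig (plus0 z)) Hp H1); auto.
  apply Ucomm; auto. apply proj2_sig.
Qed.
Lemma q_nf (z : T0) q : U q -> mul q q = q -> Lstar mul U (proj1_sig z) q -> q = proj1_sig (star0 z).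
Proof.
  intros Up Hp R. destruct (star0_spec z) as [H1 H2].
  apply (@Lstar_uniq _ mul U (proj1_sig z) _ _ Up (proj2_sig (star0 z)) Hp H1); auto.
  apply Ucomm; auto. apply proj2_sig.
Qed.

Let F2 := F2 plus0 comm0 Hp0.
Let F2' := F2' star0 comm0 Hs0.
Let F3 := F3 plus0 assoc0 Hp0.
Let F3' := F3' star0 assoc0 Hs0.
Let F1 := F1 plus0 Hp0.
Let F1' := F1' star0 Hs0.
Let idem_mul0 := idem_mul mul0 assoc0 comm0.

Lemma sig_inj (X : Type) (P : X -> Prop) (a b : sig P) : proj1_sig a = proj1_sig b -> a = b.
Proof. destruct a, b; simpl. intros ->. f_equal. apply proof_irrelevance. Qed.

Lemma barU a : U a -> bar_rel mul F U a a.
Proof.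
  intros Ha. set (z := exist U a Ha).
  destruct (plus0_spec z) as [H1 H2]. destruct (star0_spec z) as [H3 H4].
  split; [exact Ha|]. exists (proj1_sig (plus0 z)), (proj1_sig (star0 z)).
  split; [split; [exact I|exact H1]|]. split; [split; [exact I|exact H3]|].
  split; [|split].
  - assert (E1 : mul (proj1_sig (plus0 z)) a = a) by exact (Rstar_idem (proj2_sig (plus0 z)) H1 H2).
    assert (E2 : mul a (proj1_sig (star0 z)) = a) by exact (Lstar_idem (proj2_sig (star0 z)) H3 H4).
    rewrite E1, E2. reflexivity.
  - exists (proj1_sig (plus0 z)). split; [split; [apply proj2_sig|exact H1]|]. split; [exact H2|apply GL_refl].
  - exists (proj1_sig (star0 z)). split; [split; [apply proj2_sig|exact H3]|]. split; [exact H4|apply GR_refl].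
Qed.

Lemma bar_idemL e p : mul e e = e -> U p -> mul p p = p -> GreenL mul F e p -> bar_rel mul F U e p.
Proof.
  intros He Up Hp G. destruct (GLp He Hp G) as [A1 A2].
  destruct (bar_ex1 e) as [eb Heb]. pose proof (barU Up) as Hpp.
  pose proof (HAd I I Heb Hpp) as H1. rewrite A1 in H1. pose proof (bar_uq Heb H1) as E1.
  pose proof (HAd I I Hpp Heb) as H2. rewrite A2 in H2. pose proof (bar_uq Hpp H2) as E2.
  pose proof (HAd I I Heb Heb) as H3. rewrite He in H3. pose proof (bar_uq Heb H3) as E3.
  assert (Ueb : U eb) by (destruct Heb; auto).
  assert (eb = p).
  { rewrite E1, Ucomm; auto. }
  subst; exact Heb.
Qed.
Lemma bar_idemR f q : mul f f = f -> U q -> mul q q = q -> GreenR mul F f q -> bar_rel mul F U f q.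
Proof.
  intros He Up Hp G. destruct (GRp He Hp G) as [A1 A2].
  destruct (bar_ex1 f) as [eb Heb]. pose proof (barU Up) as Hpp.
  pose proof (HAd I I Heb Hpp) as H1. rewrite A2 in H1. pose proof (bar_uq Hpp H1) as E1.
  pose proof (HAd I I Hpp Heb) as H2. rewrite A1 in H2. pose proof (bar_uq Heb H2) as E2.
  pose proof (HAd I I Heb Heb) as H3. rewrite He in H3. pose proof (bar_uq Heb H3) as E3.
  assert (Ueb : U eb) by (destruct Heb; auto).
  assert (eb = q).
  { rewrite E2, Ucomm; auto. }
  subst; exact Heb.
Qed.

Definition Dec (x : T) (z : T0) (e f : T) : Prop :=
  mul e e = e /\ mul f f = f /\ x = mul (mul e (proj1_sig z)) f /\
  GreenL mul F e (proj1_sig (plus0 z)) /\ GreenR mul F f (proj1_sig (star0 z)).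

Lemma Dec_bar x z e f : Dec x z e f -> bar_rel mul F U x (proj1_sig z).
Proof.
  intros [He [Hf [Hx [G1 G2]]]]. split; [apply proj2_sig|].
  exists e, f. split; [split; [exact I|exact He]|]. split; [split; [exact I|exact Hf]|].
  split; [exact Hx|]. destruct (plus0_spec z). destruct (star0_spec z). split.
  - exists (proj1_sig (plus0 z)). split; [split; [apply proj2_sig|auto]|auto].
  - exists (proj1_sig (star0 z)). split; [split; [apply proj2_sig|auto]|auto].
Qed.
Lemma Dec_R x z e f : Dec x z e f -> Rstar mul F x e.
Proof.
  intros [He [Hf [Hx [G1 G2]]]]. destruct (plus0_spec z). destruct (star0_spec z).
  apply (dec_R (proj2_sig z) He Hf Hx (proj2_sig (plus0 z)) H H0 G1 (proj2_sig (star0 z)) H1 H2 G2).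
Qed.
Lemma Dec_L x z e f : Dec x z e f -> Lstar mul F x f.
Proof.
  intros [He [Hf [Hx [G1 G2]]]]. destruct (plus0_spec z). destruct (star0_spec z).
  apply (dec_L (proj2_sig z) He Hf Hx (proj2_sig (plus0 z)) H H0 G1 (proj2_sig (star0 z)) H1 H2 G2).
Qed.
Lemma Dec_unique x z e f z' e' f' : Dec x z e f -> Dec x z' e' f' -> z = z' /\ e = e' /\ f = f'.
Proof.
  intros D D'. assert (Ez : z = z').
  { apply val_inj. apply (bar_uq (Dec_bar D) (Dec_bar D')). }
  subst z'. pose proof (Dec_R D) as R. pose proof (Dec_R D') as R'.
  pose proof (Dec_L D) as L. pose proof (Dec_L D') as L'.
  destruct D as [He [Hf [_ [G1 G2]]]]. destruct D' as [He' [Hf' [_ [G1' G2']]]].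
  split; [reflexivity|]. split.
  - apply (Ridem_GL_eq He He' (proj1 (plus0_spec z)) (Rstar_trans3 R R') G1 G1').
  - apply (Lidem_GR_eq Hf Hf' (proj1 (star0_spec z)) (Lstar_trans3 L L') G2 G2').
Qed.

Definition bsig (x : T) : {xb | bar_rel mul F U x xb} := cid _ (bar_ex1 x).
Definition xbar x := proj1_sig (bsig x).
Lemma xbar_U x : U (xbar x). Proof. exact (proj1 (proj2_sig (bsig x))). Qed.
Definition bar0 x : T0 := exist U (xbar x) (xbar_U x).
Definition esig x := cid _ (proj2 (proj2_sig (bsig x))).
Definition eS x := proj1_sig (esig x).
Definition fsig x := cid _ (proj2_sig (esig x)).
Definition fS x := proj1_sig (fsig x).

Lemma dec_spec x : Dec x (bar0 x) (eS x) (fS x).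
Proof.
  pose proof (proj2_sig (fsig x)) as H. fold (fS x) in H. unfold fsig in H.
  destruct H as [[_ He] [[_ Hf] [Hx [[p [[Up Hp] [Rp Gp]]] [q [[Uq Hq] [Lq Gq]]]]]]].
  split; [exact He|]. split; [exact Hf|]. split; [exact Hx|]. split.
  - rewrite <- (p_nf (bar0 x) Up Hp Rp). exact Gp.
  - rewrite <- (q_nf (bar0 x) Uq Hq Lq). exact Gq.
Qed.

Lemma key_mid x y : mul (xbar x) (mul (fS x) (mul (eS y) (xbar y))) = mul (xbar x) (xbar y).
Proof.
  destruct (dec_spec x) as [Hex [Hfx [_ [Gex Gfx]]]].
  destruct (dec_spec y) as [Hey [Hfy [_ [Gey Gfy]]]].
  set (sx := proj1_sig (star0 (bar0 x))). set (py := proj1_sig (plus0 (bar0 y))).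
  destruct (star0_spec (bar0 x)) as [Hsx Lsx]. destruct (plus0_spec (bar0 y)) as [Hpy Rpy].
  fold sx in Hsx, Lsx, Gfx. fold py in Hpy, Rpy, Gey.
  assert (Usx : U sx) by apply proj2_sig. assert (Upy : U py) by apply proj2_sig.
  pose proof (barU (xbar_U x)) as Bx. pose proof (barU (xbar_U y)) as By.
  pose proof (bar_idemR Hfx Usx Hsx Gfx) as Bf. pose proof (bar_idemL Hey Upy Hpy Gey) as Be.
  pose proof (HAd I I Bf Be) as B1. pose proof (HAd I I Bx B1) as B2. pose proof (HAd I I B2 By) as B3.
  assert (Uw : U (mul (mul (xbar x) (mul (fS x) (eS y))) (xbar y))) by (apply HQI; auto using xbar_U; exact I).
  pose proof (bar_uq (barU Uw) B3) as E.
  assert (E1 : mul (xbar x) sx = xbar x) by exact (Lstar_idem Usx Hsx Lsx).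
  assert (E2 : mul py (xbar y) = xbar y) by exact (Rstar_idem Upy Hpy Rpy).
  rewrite <- (assoc (fS x)), <- assoc, E, !assoc, E2, <- assoc, E1. reflexivity.
Qed.

Lemma Dec_mul x y : Dec (mul x y) (mul0 (bar0 x) (bar0 y))
  (mul (eS x) (proj1_sig (plus0 (mul0 (bar0 x) (bar0 y)))))
  (mul (proj1_sig (star0 (mul0 (bar0 x) (bar0 y)))) (fS y)).
Proof.
  set (m := mul0 (bar0 x) (bar0 y)).
  destruct (dec_spec x) as [Hex [Hfx [Ex [Gex Gfx]]]].
  destruct (dec_spec y) as [Hey [Hfy [Ey [Gey Gfy]]]].
  destruct (plus0_spec m) as [Hq Rq]. destruct (star0_spec m) as [Hr Lr].
  assert (Q1 : mul (proj1_sig (plus0 m)) (proj1_sig m) = proj1_sig m)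
    by exact (Rstar_idem (proj2_sig (plus0 m)) Hq Rq).
  assert (R1 : mul (proj1_sig m) (proj1_sig (star0 m)) = proj1_sig m)
    by exact (Lstar_idem (proj2_sig (star0 m)) Hr Lr).
  split; [apply Eclos; auto|]. split; [apply Eclos; auto|]. split; [|split].
  - rewrite Ex at 1. rewrite Ey at 1.
    rewrite (assoc (eS x) (proj1_sig (plus0 m)) (proj1_sig m)), Q1.
    rewrite (assoc (eS x) (proj1_sig m)), <- (assoc (proj1_sig m)), R1.
    change (proj1_sig m) with (mul (xbar x) (xbar y)).
    change (proj1_sig (bar0 x)) with (xbar x). change (proj1_sig (bar0 y)) with (xbar y).
    rewrite <- key_mid, !assoc. reflexivity.
  - assert (P : mul (proj1_sig (plus0 (bar0 x))) (proj1_sig (plus0 m)) = proj1_sig (plus0 m)).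
    { exact (f_equal (@proj1_sig _ _) (F3 (bar0 x) (bar0 y))). }
    rewrite <- P at 2. apply GL_rcong. exact Gex.
  - assert (P : mul (proj1_sig (star0 m)) (proj1_sig (star0 (bar0 y))) = proj1_sig (star0 m)).
    { exact (f_equal (@proj1_sig _ _) (F3' (bar0 x) (bar0 y))). }
    rewrite <- P at 2. apply GR_lcong. exact Gfy.
Qed.

Definition TIp (e : T) : Prop := mul e e = e /\ exists p, U p /\ mul p p = p /\ GreenL mul F e p.
Definition TI := sig TIp.
Definition piI (a : TI) : T := proj1_sig (cid _ (proj2 (proj2_sig a))).
Lemma piI_spec a : U (piI a) /\ mul (piI a) (piI a) = piI a /\ GreenL mul F (proj1_sig a) (piI a).
Proof. exact (proj2_sig (cid _ (proj2 (proj2_sig a)))). Qed.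
Lemma TI_idem (a : TI) : mul (proj1_sig a) (proj1_sig a) = proj1_sig a.
Proof. exact (proj1 (proj2_sig a)). Qed.
Lemma piI_eq a p : U p -> mul p p = p -> GreenL mul F (proj1_sig a) p -> piI a = p.
Proof.
  intros Up Hp G. destruct (piI_spec a) as [U1 [H1 G1]].
  exact (GL_uniqE (TI_idem a) U1 Up H1 Hp G1 G).
Qed.
Lemma TI_ap a : mul (proj1_sig a) (piI a) = proj1_sig a /\ mul (piI a) (proj1_sig a) = piI a.
Proof. destruct (piI_spec a) as [U1 [H1 G1]]. exact (GLp (TI_idem a) H1 G1). Qed.

Lemma mulI_proof (a b : TI) : TIp (mul (proj1_sig a) (piI b)).
Proof.
  destruct (piI_spec a) as [Ua [Ha Ga]]. destruct (piI_spec b) as [Ub [Hb Gb]].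
  split; [apply Eclos; auto; apply TI_idem|].
  exists (mul (piI a) (piI b)). split; [apply Uclos; auto|]. split; [apply Eclos; auto|].
  apply GL_rcong, Ga.
Qed.
Definition mulI (a b : TI) : TI := exist TIp _ (mulI_proof a b).
Lemma piI_mul a b : piI (mulI a b) = mul (piI a) (piI b).
Proof.
  destruct (piI_spec a) as [Ua [Ha Ga]]. destruct (piI_spec b) as [Ub [Hb Gb]].
  apply piI_eq; [apply Uclos; auto|apply Eclos; auto|]. simpl. apply GL_rcong, Ga.
Qed.
Lemma jI_proof (x : T0) : TIp (proj1_sig (plus0 x)).
Proof.
  destruct (plus0_spec x) as [H1 H2]. split; [exact H1|].
  exists (proj1_sig (plus0 x)). split; [apply proj2_sig|]. split; [exact H1|apply GL_refl].
Qed.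
Definition jI (x : T0) : TI := exist TIp _ (jI_proof x).
Lemma piI_jI x : piI (jI x) = proj1_sig (plus0 x).
Proof. apply piI_eq; [apply proj2_sig|apply plus0_spec|apply GL_refl]. Qed.

Definition TLp (f : T) : Prop := mul f f = f /\ exists q, U q /\ mul q q = q /\ GreenR mul F f q.
Definition TL := sig TLp.
Definition piL (a : TL) : T := proj1_sig (cid _ (proj2 (proj2_sig a))).
Lemma piL_spec a : U (piL a) /\ mul (piL a) (piL a) = piL a /\ GreenR mul F (proj1_sig a) (piL a).
Proof. exact (proj2_sig (cid _ (proj2 (proj2_sig a)))). Qed.
Lemma TL_idem (a : TL) : mul (proj1_sig a) (proj1_sig a) = proj1_sig a.
Proof. exact (proj1 (proj2_sig a)). Qed.
Lemma piL_eq a p : U p -> mul p p = p -> GreenR mul F (proj1_sig a) p -> piL a = p.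
Proof.
  intros Up Hp G. destruct (piL_spec a) as [U1 [H1 G1]].
  exact (GR_uniqE (TL_idem a) U1 Up H1 Hp G1 G).
Qed.
Lemma TL_ap a : mul (piL a) (proj1_sig a) = proj1_sig a /\ mul (proj1_sig a) (piL a) = piL a.
Proof. destruct (piL_spec a) as [U1 [H1 G1]]. exact (GRp (TL_idem a) H1 G1). Qed.

Lemma mulL_proof (a b : TL) : TLp (mul (piL a) (proj1_sig b)).
Proof.
  destruct (piL_spec a) as [Ua [Ha Ga]]. destruct (piL_spec b) as [Ub [Hb Gb]].
  split; [apply Eclos; auto; apply TL_idem|].
  exists (mul (piL a) (piL b)). split; [apply Uclos; auto|]. split; [apply Eclos; auto|].
  apply GR_lcong, Gb.
Qed.
Definition mulL (a b : TL) : TL := exist TLp _ (mulL_proof a b).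
Lemma piL_mul a b : piL (mulL a b) = mul (piL a) (piL b).
Proof.
  destruct (piL_spec a) as [Ua [Ha Ga]]. destruct (piL_spec b) as [Ub [Hb Gb]].
  apply piL_eq; [apply Uclos; auto|apply Eclos; auto|]. simpl. apply GR_lcong, Gb.
Qed.
Lemma jL_proof (x : T0) : TLp (proj1_sig (star0 x)).
Proof.
  destruct (star0_spec x) as [H1 H2]. split; [exact H1|].
  exists (proj1_sig (star0 x)). split; [apply proj2_sig|]. split; [exact H1|apply GR_refl].
Qed.
Definition jL (x : T0) : TL := exist TLp _ (jL_proof x).
Lemma piL_jL x : piL (jL x) = proj1_sig (star0 x).
Proof. apply piL_eq; [apply proj2_sig|apply star0_spec|apply GR_refl]. Qed.

Lemma val_plus_idem (e : T0) : mul0 e e = e -> proj1_sig (plus0 e) = proj1_sig e.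
Proof. intros He. rewrite (F2 He). reflexivity. Qed.
Lemma val_star_idem (e : T0) : mul0 e e = e -> proj1_sig (star0 e) = proj1_sig e.
Proof. intros He. rewrite (F2' He). reflexivity. Qed.
Lemma val_idem (e : T0) : mul0 e e = e -> mul (proj1_sig e) (proj1_sig e) = proj1_sig e.
Proof. intros He. exact (f_equal (@proj1_sig _ _) He). Qed.

Lemma GLTI_of (a b : TI) : piI a = piI b -> GreenL mulI (full TI) a b.
Proof.
  intros H. apply GL_of; try exact I.
  - apply sig_inj. simpl. rewrite <- H. apply TI_ap.
  - apply sig_inj. simpl. rewrite H. apply TI_ap.
Qed.
Lemma GRTL_of (a b : TL) : piL a = piL b -> GreenR mulL (full TL) a b.
Proof.
  intros H. apply GR_of; try exact I.
  - apply sig_inj. simpl. rewrite <- H. apply TL_ap.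
  - apply sig_inj. simpl. rewrite H. apply TL_ap.
Qed.
Lemma piI_lact u b : piI (lact mulI u b) = lact mul (omap piI u) (piI b).
Proof. destruct u; simpl; [apply piI_mul|reflexivity]. Qed.
Lemma piL_ract u b : piL (ract mulL b u) = ract mul (piL b) (omap piL u).
Proof. destruct u; simpl; [apply piL_mul|reflexivity]. Qed.
Lemma omap_piI_ok u : one_ok U (omap piI u).
Proof. destruct u; simpl; auto. apply piI_spec. Qed.
Lemma omap_piL_ok u : one_ok U (omap piL u).
Proof. destruct u; simpl; auto. apply piL_spec. Qed.

Lemma GLTI_pi (a b : TI) : GreenL mulI (full TI) a b -> piI a = piI b.
Proof.
  intros [u [v [_ [_ [E1 E2]]]]].
  destruct (piI_spec a) as [Ua [Ha _]]. destruct (piI_spec b) as [Ub [Hb _]].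
  apply (GL_idem_eq assocU Ua Ub Ha Hb (Ucomm Ua Ub Ha Hb)).
  exists (omap piI u), (omap piI v). split; [apply omap_piI_ok|]. split; [apply omap_piI_ok|].
  rewrite <- !piI_lact, <- E1, <- E2. auto.
Qed.
Lemma GRTL_pi (a b : TL) : GreenR mulL (full TL) a b -> piL a = piL b.
Proof.
  intros [u [v [_ [_ [E1 E2]]]]].
  destruct (piL_spec a) as [Ua [Ha _]]. destruct (piL_spec b) as [Ub [Hb _]].
  apply (GR_idem_eq assocU Ua Ub Ha Hb (Ucomm Ua Ub Ha Hb)).
  exists (omap piL u), (omap piL v). split; [apply omap_piL_ok|]. split; [apply omap_piL_ok|].
  rewrite <- !piL_ract, <- E1, <- E2. auto.
Qed.

Lemma piI_comm a b : mul (piI a) (piI b) = mul (piI b) (piI a).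
Proof. destruct (piI_spec a) as [Ua [Ha _]]. destruct (piI_spec b) as [Ub [Hb _]]. apply Ucomm; auto. Qed.
Lemma piL_comm a b : mul (piL a) (piL b) = mul (piL b) (piL a).
Proof. destruct (piL_spec a) as [Ua [Ha _]]. destruct (piL_spec b) as [Ub [Hb _]]. apply Ucomm; auto. Qed.

Lemma Whyp : W_hyp mul0 plus0 star0 mulI jI mulL jL.
Proof.
  split; [apply T0_adequate|].
  split; [intros x; split; [split; [exact I|apply Hp0]|apply Hp0]|].
  split; [intros x; split; [split; [exact I|apply Hs0]|apply Hs0]|].
  split.
  { split; [split; [split|]|].
    - intros; exact I.
    - intros x y z _ _ _. apply sig_inj. cbn [proj1_sig mulI jI mulL jL]. rewrite piI_mul, assoc. reflexivity.
    - intros x. apply sig_inj. cbn [proj1_sig mulI jI mulL jL]. apply TI_ap.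
    - intros x y z. apply sig_inj. cbn [proj1_sig mulI jI mulL jL]. rewrite !assoc, piI_comm. reflexivity. }
  split.
  { split; [split; [split|]|].
    - intros; exact I.
    - intros x y z _ _ _. apply sig_inj. cbn [proj1_sig mulI jI mulL jL]. rewrite piL_mul, assoc. reflexivity.
    - intros x. apply sig_inj. cbn [proj1_sig mulI jI mulL jL]. apply TL_ap.
    - intros x y z. apply sig_inj. cbn [proj1_sig mulI jI mulL jL]. rewrite !piL_mul, piL_comm. reflexivity. }
  split.
  { intros e f [_ He] [_ Hf]. apply sig_inj. cbn [proj1_sig mulI jI mulL jL]. rewrite piI_jI.
    rewrite (val_plus_idem He), (val_plus_idem Hf), (val_plus_idem (idem_mul0 He Hf)). reflexivity. }
  split.
  { intros e f [_ He] [_ Hf] H. apply (f_equal (@proj1_sig _ _)) in H. cbn [proj1_sig mulI jI mulL jL] in H.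
    rewrite (val_plus_idem He), (val_plus_idem Hf) in H. apply val_inj; exact H. }
  split.
  { intros e f [_ He] [_ Hf]. apply sig_inj. cbn [proj1_sig mulI jI mulL jL]. rewrite piL_jL.
    rewrite (val_star_idem He), (val_star_idem Hf), (val_star_idem (idem_mul0 He Hf)). reflexivity. }
  split.
  { intros e f [_ He] [_ Hf] H. apply (f_equal (@proj1_sig _ _)) in H. cbn [proj1_sig mulI jI mulL jL] in H.
    rewrite (val_star_idem He), (val_star_idem Hf) in H. apply val_inj; exact H. }
  split.
  { intros a. destruct (piI_spec a) as [Ua [Ha Ga]].
    assert (He : mul0 (exist U (piI a) Ua) (exist U (piI a) Ua) = exist U (piI a) Ua) by (apply val_inj; exact Ha).
    exists (exist U (piI a) Ua). split; [split; [exact I|exact He]|]. split.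
    - split.
      + apply sig_inj. cbn [proj1_sig mulI jI mulL jL]. rewrite piI_jI, (val_plus_idem He). cbn [proj1_sig mulI jI mulL jL].
        destruct (TI_ap a) as [A1 _]. rewrite A1, A1. reflexivity.
      + apply sig_inj. cbn [proj1_sig mulI jI mulL jL]. rewrite piI_jI, (val_plus_idem He). cbn [proj1_sig mulI jI mulL jL]. rewrite !Ha. reflexivity.
    - intros e' [_ He'] [I1 I2].
      apply (f_equal (@proj1_sig _ _)) in I1. apply (f_equal (@proj1_sig _ _)) in I2. cbn [proj1_sig mulI jI mulL jL] in I1, I2.
      rewrite piI_jI, (val_plus_idem He') in I1, I2.
      apply val_inj. cbn [proj1_sig mulI jI mulL jL]. set (r := proj1_sig e') in *. pose proof (val_idem He') as Hr. fold r in Hr.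
      assert (Ur : U r) by apply proj2_sig.
      assert (C : mul (piI a) r = mul r (piI a)) by (apply Ucomm; auto).
      assert (K1 : mul r (piI a) = r).
      { rewrite <- I2 at 2. rewrite assoc, C, <- assoc, Hr. reflexivity. }
      assert (K2 : mul (proj1_sig a) r = proj1_sig a) by (rewrite <- I1 at 2; rewrite assoc, K1; reflexivity).
      assert (K3 : mul (piI a) r = piI a).
      { destruct Ga as [u [v [_ [_ [_ E2]]]]]. rewrite E2, <- lact_mul, K2. reflexivity. }
      rewrite <- K1, <- C. exact K3. }
  split.
  { intros a. destruct (piL_spec a) as [Ua [Ha Ga]].
    assert (He : mul0 (exist U (piL a) Ua) (exist U (piL a) Ua) = exist U (piL a) Ua) by (apply val_inj; exact Ha).
    exists (exist U (piL a) Ua). split; [split; [exact I|exact He]|]. split.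
    - split.
      + apply sig_inj. cbn [proj1_sig mulI jI mulL jL]. rewrite piL_mul, piL_jL, (val_star_idem He). cbn [proj1_sig mulI jI mulL jL].
        destruct (TL_ap a) as [A1 _]. rewrite Ha, A1. reflexivity.
      + apply sig_inj. cbn [proj1_sig mulI jI mulL jL]. rewrite piL_mul, piL_jL, (val_star_idem He). cbn [proj1_sig mulI jI mulL jL]. rewrite !Ha. reflexivity.
    - intros e' [_ He'] [I1 I2].
      apply (f_equal (@proj1_sig _ _)) in I1. apply (f_equal (@proj1_sig _ _)) in I2. cbn [proj1_sig mulI jI mulL jL] in I1, I2.
      rewrite piL_mul, piL_jL, (val_star_idem He') in I1, I2.
      apply val_inj. cbn [proj1_sig mulI jI mulL jL]. set (r := proj1_sig e') in *. pose proof (val_idem He') as Hr. fold r in Hr.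
      assert (Ur : U r) by apply proj2_sig.
      assert (C : mul (piL a) r = mul r (piL a)) by (apply Ucomm; auto).
      assert (K1 : mul r (piL a) = r).
      { rewrite <- I2 at 2. rewrite assoc, C, <- assoc, Hr. reflexivity. }
      assert (K2 : mul r (proj1_sig a) = proj1_sig a) by (rewrite <- I1 at 2; rewrite C, K1; reflexivity).
      assert (K3 : mul r (piL a) = piL a).
      { destruct Ga as [u [v [_ [_ [_ E2]]]]]. rewrite E2, <- ract_mul, K2. reflexivity. }
      rewrite <- K1. exact K3. }
  split.
  { intros a. destruct (piI_spec a) as [Ua [Ha Ga]].
    assert (He : mul0 (exist U (piI a) Ua) (exist U (piI a) Ua) = exist U (piI a) Ua) by (apply val_inj; exact Ha).
    exists (exist U (piI a) Ua). split; [split; [exact I|exact He]|].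
    apply GLTI_of. rewrite piI_jI, (val_plus_idem He). reflexivity. }
  { intros a. destruct (piL_spec a) as [Ua [Ha Ga]].
    assert (He : mul0 (exist U (piL a) Ua) (exist U (piL a) Ua) = exist U (piL a) Ua) by (apply val_inj; exact Ha).
    exists (exist U (piL a) Ua). split; [split; [exact I|exact He]|].
    apply GRTL_of. rewrite piL_jL, (val_star_idem He). reflexivity. }
Qed.

Lemma eI_proof x : TIp (eS x).
Proof.
  destruct (dec_spec x) as [He [_ [_ [G _]]]]. split; [exact He|].
  exists (proj1_sig (plus0 (bar0 x))). split; [apply proj2_sig|]. split; [apply plus0_spec|exact G].
Qed.
Lemma fL_proof x : TLp (fS x).
Proof.
  destruct (dec_spec x) as [_ [Hf [_ [_ G]]]]. split; [exact Hf|].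
  exists (proj1_sig (star0 (bar0 x))). split; [apply proj2_sig|]. split; [apply star0_spec|exact G].
Qed.
Definition eI x : TI := exist TIp _ (eI_proof x).
Definition fL x : TL := exist TLp _ (fL_proof x).
Definition psi (x : T) : TI * T0 * TL := (eI x, bar0 x, fL x).

Lemma S_iso : iso mul F (W_mul mul0 plus0 star0 mulI jI mulL jL) (W_carrier plus0 star0 mulI jI mulL jL).
Proof.
  exists psi. split; [|split; [|split]].
  - intros x _. unfold psi. cbn [W_carrier]. split.
    + apply GLTI_of. rewrite piI_jI, (val_plus_idem (proj1 (Hp0 _))).
      apply piI_eq; [apply proj2_sig|apply plus0_spec|apply (dec_spec x)].
    + apply GRTL_of. rewrite piL_jL, (val_star_idem (proj1 (Hs0 _))).
      apply piL_eq; [apply proj2_sig|apply star0_spec|apply (dec_spec x)].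
  - intros x y _ _ H. unfold psi in H. injection H as H1 H2 H3.
    destruct (dec_spec x) as [_ [_ [Ex _]]]. destruct (dec_spec y) as [_ [_ [Ey _]]].
    transitivity (mul (mul (eS x) (proj1_sig (bar0 x))) (fS x)); [exact Ex|].
    cbn [proj1_sig bar0]. rewrite H1, H2, H3. symmetry. exact Ey.
  - intros [[a z] b] [G1 G2].
    apply GLTI_pi in G1. apply GRTL_pi in G2.
    rewrite piI_jI, (val_plus_idem (proj1 (Hp0 _))) in G1.
    rewrite piL_jL, (val_star_idem (proj1 (Hs0 _))) in G2.
    set (x := mul (mul (proj1_sig a) (proj1_sig z)) (proj1_sig b)).
    assert (D : Dec x z (proj1_sig a) (proj1_sig b)).
    { split; [apply TI_idem|]. split; [apply TL_idem|]. split; [reflexivity|]. split.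
      - rewrite <- G1. apply piI_spec.
      - rewrite <- G2. apply piL_spec. }
    destruct (Dec_unique (dec_spec x) D) as [E1 [E2 E3]].
    exists x. split; [exact I|]. unfold psi. rewrite E1.
    f_equal; [f_equal|]; apply sig_inj; assumption.
  - intros x y _ _. destruct (Dec_unique (dec_spec (mul x y)) (Dec_mul x y)) as [E1 [E2 E3]].
    unfold psi. cbn [W_mul]. f_equal; [f_equal|].
    + apply sig_inj. cbn [proj1_sig eI mulI]. rewrite piI_jI, (val_plus_idem (proj1 (Hp0 _))). exact E2.
    + exact E1.
    + apply sig_inj. cbn [proj1_sig fL mulL]. rewrite piL_jL, (val_star_idem (proj1 (Hs0 _))). exact E3.
Qed.
End P2.


Lemma part1 : forall (T0 : Type) (mul0 : T0 -> T0 -> T0) (plus star : T0 -> T0)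
     (TI : Type) (mulI : TI -> TI -> TI) (jI : T0 -> TI)
     (TL : Type) (mulL : TL -> TL -> TL) (jL : T0 -> TL),
   W_hyp mul0 plus star mulI jI mulL jL ->
   quasi_adequate (W_mul mul0 plus star mulI jI mulL jL) (W_carrier plus star mulI jI mulL jL) /\
   exists U : TI * T0 * TL -> Prop,
     adequate_transversal (W_mul mul0 plus star mulI jI mulL jL) (W_carrier plus star mulI jI mulL jL) U /\
     quasi_ideal (W_mul mul0 plus star mulI jI mulL jL) (W_carrier plus star mulI jI mulL jL) U /\
     admissible (W_mul mul0 plus star mulI jI mulL jL) (W_carrier plus star mulI jI mulL jL) U /\
     iso mul0 (full T0) (W_mul mul0 plus star mulI jI mulL jL) U.
Proof.
  intros T0 mul0 plus star TI mulI jI TL mulL jL H.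
  destruct H as [h1 [h2 [h3 [h4 [h5 [h6 [h7 [h8 _]]]]]]]].
  destruct h1 as [[[_ A0] _] C0]. destruct h4 as [[[_ AI] II] LI]. destruct h5 as [[[_ AL] IL] RL].
  apply part1_sec.
  - intros; apply A0; exact I.
  - intros e f He Hf. apply C0; split; auto; exact I.
  - intros x. destruct (h2 x) as [[_ ?] ?]. auto.
  - intros x. destruct (h3 x) as [[_ ?] ?]. auto.
  - intros; apply AI; exact I.
  - exact II.
  - exact LI.
  - intros; apply AL; exact I.
  - exact IL.
  - exact RL.
  - intros e f He Hf. apply h6; split; auto; exact I.
  - intros e f He Hf. apply h8; split; auto; exact I.
Qed.

Theorem corollary2p17 :
  (forall (T0 : Type) (mul0 : T0 -> T0 -> T0) (plus star : T0 -> T0)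
     (TI : Type) (mulI : TI -> TI -> TI) (jI : T0 -> TI)
     (TL : Type) (mulL : TL -> TL -> TL) (jL : T0 -> TL),
   W_hyp mul0 plus star mulI jI mulL jL ->
   let Wc := W_carrier plus star mulI jI mulL jL in
   let Wm := W_mul mul0 plus star mulI jI mulL jL in
   quasi_adequate Wm Wc /\
   exists U : TI * T0 * TL -> Prop,
     adequate_transversal Wm Wc U /\ quasi_ideal Wm Wc U /\ admissible Wm Wc U /\
     iso mul0 (full T0) Wm U)
  /\
  (forall (T : Type) (mul : T -> T -> T) (U : T -> Prop),
   quasi_adequate mul (full T) ->
   adequate_transversal mul (full T) U -> quasi_ideal mul (full T) U ->
   admissible mul (full T) U ->
   exists (T0 : Type) (mul0 : T0 -> T0 -> T0) (plus star : T0 -> T0)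
     (TI : Type) (mulI : TI -> TI -> TI) (jI : T0 -> TI)
     (TL : Type) (mulL : TL -> TL -> TL) (jL : T0 -> TL),
   W_hyp mul0 plus star mulI jI mulL jL /\
   iso mul (full T) (W_mul mul0 plus star mulI jI mulL jL)
       (W_carrier plus star mulI jI mulL jL)).
Proof.
  split.
  - intros T0 mul0 plus star TI mulI jI TL mulL jL H. cbv zeta. apply part1. exact H.
  - intros T mul U HQ HT HQI HAd.
    exists (T0 U), (mul0 HT), (plus0 HT), (star0 HT), (TI mul U), (mulI HQ HT), (jI HT),
      (TL mul U), (mulL HQ HT), (jL HT).
    split; [apply Whyp|apply S_iso; assumption].
Qed.
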